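(* Let $n\ge 3$, $s,t\in\{-1,1\}^{n}$ with $s\neq t$ and $\sharp_{n}(s)=\sharp_{n}(t)$, and let $(\beta_{1},\beta_{2})\in(0,1)^2$ with $\beta_{1}+\beta_{2}>1$ satisfy \[ \sum_{k=1}^{n}\Big(s_{k}\beta_{1}^{\sharp_{k}(s)}\beta_{2}^{\tilde\sharp_{k}(s)}-t_{k}\beta_{1}^{\sharp_{k}(t)}\beta_{2}^{\tilde\sharp_{k}(t)}\Big)=0 .\] Then there is a $p\in(0,1)$ such that $\widehat{SD}^{p}_{\beta_{1},\beta_{2}}<1$ and $SD^{p}_{\beta_{1},\beta_{2}}>1$.
   Context: $SD^{p}_{\beta_{1},\beta_{2}}=\frac{-p\log p-(1-p)\log(1-p)}{-p\log\beta_{1}-(1-p)\log\beta_{2}}$. For $r\in\{-1,1\}^{n}$ and $1\le k\le n$, $\sharp_{k}(r)$ is the number of entries of $(r_1,\dots,r_k)$ equal to $1$ and $\tilde\sharp_{k}(r)=k-\sharp_{k}(r)$. Put $w_r=p^{\sharp_{n}(r)}(1-p)^{\tilde\sharp_{n}(r)}$, $p_{s,t}=w_s+w_t$, $\rho_r=\beta_{1}^{\sharp_{n}(r)}\beta_{2}^{\tilde\sharp_{n}(r)}$, and \[ \widehat{SD}^{p}_{\beta_{1},\beta_{2}}=\frac{-\sum_{r\in\{-1,1\}^{n}\setminus\{s,t\}}w_r\log w_r-p_{s,t}\log p_{s,t}}{-\sum_{r\in\{-1,1\}^{n}\setminus\{s,t\}}w_r\log \rho_r-p_{s,t}\log\rho_s}.\]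 *)

(* Defs.v *)
From mathcomp Require Import all_boot all_order all_algebra.
From mathcomp Require Import all_classical all_reals all_analysis.
Set Implicit Arguments. Unset Strict Implicit. Unset Printing Implicit Defensive.
Import Order.TTheory GRing.Theory Num.Theory.
Local Open Scope ring_scope.

(* A sign vector r in {-1,1}^n is encoded as r : {ffun 'I_n -> bool},
   with true <-> +1 and false <-> -1.  Entry r_k (k = 1..n) is r (k-1). *)
Definition sgnb {R : ringType} (b : bool) : R := if b then 1 else -1.

Definition cnt {n : nat} (r : {ffun 'I_n -> bool}) (k : nat) : nat :=
  #|[set i : 'I_n | (i < k)%N && r i]|.

Definition cntc {n : nat} (r : {ffun 'I_n -> bool}) (k : nat) : nat :=
  (k - cnt r k)%N.

Definition SD {R : realType} (p b1 b2 : R) : R :=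
  (- p * ln p - (1 - p) * ln (1 - p)) / (- p * ln b1 - (1 - p) * ln b2).

Definition wt {R : realType} {n : nat} (p : R) (r : {ffun 'I_n -> bool}) : R :=
  p ^+ cnt r n * (1 - p) ^+ cntc r n.

Definition rho {R : realType} {n : nat} (b1 b2 : R) (r : {ffun 'I_n -> bool}) : R :=
  b1 ^+ cnt r n * b2 ^+ cntc r n.

Definition SDhat {R : realType} {n : nat} (s t : {ffun 'I_n -> bool}) (p b1 b2 : R) : R :=
  let pst := wt p s + wt p t in
  (- (\sum_(r : {ffun 'I_n -> bool} | (r != s) && (r != t)) wt p r * ln (wt p r))
     - pst * ln pst)
  / (- (\sum_(r : {ffun 'I_n -> bool} | (r != s) && (r != t)) wt p r * ln (rho b1 b2 r))
     - pst * ln (rho b1 b2 s)).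

(* Main.v *)
Require Import Defs.
From mathcomp Require Import all_boot all_order all_algebra.
From mathcomp Require Import all_classical all_reals all_analysis.
From mathcomp Require Import ring lra.
Import Order.TTheory GRing.Theory Num.Theory.
Import numFieldNormedType.Exports.
Local Open Scope ring_scope.

Section Comb.
Variables (R : realType) (n : nat).
Implicit Types (r : {ffun 'I_n -> bool}) (x y : R).

Definition pw x y r : R := \prod_(i < n) (if r i then x else y).

Lemma cnt_card r : cnt r n = #|[set i | r i]|.
Proof. by rewrite /cnt; apply: eq_card => i; rewrite !inE ltn_ord. Qed.

Lemma cntc_card r : cntc r n = #|[set i | ~~ r i]|.
Proof.
rewrite /cntc cnt_card.
have H := cardsC [set i | r i]; rewrite card_ord in H.
transitivity ((#|[set i | r i]| + #|~: [set i | r i]|) - #|[set i | r i]|)%N; first by rewrite H.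
by rewrite addKn; apply: eq_card => i; rewrite !inE.
Qed.

Lemma pwE x y r : pw x y r = x ^+ cnt r n * y ^+ cntc r n.
Proof.
rewrite /pw (bigID (fun i => r i)) /= cnt_card cntc_card.
rewrite (eq_bigr (fun _ => x)); last by move=> i ->.
rewrite [X in _ * X](eq_bigr (fun _ => y)); last by move=> i /negbTE ->.
rewrite !prodr_const; congr (_ ^+ _ * _ ^+ _); apply: eq_card => i; by rewrite !inE.
Qed.

Lemma sum_pw x y : \sum_r pw x y r = (x + y) ^+ n.
Proof.
rewrite /pw -(bigA_distr_bigA (fun (_ : 'I_n) (b : bool) => if b then x else y)) /=.
rewrite -[in RHS](card_ord n) -prodr_const.
by apply: eq_bigr => i _; rewrite big_bool.
Qed.

Lemma sum_pw_cnt x y b0 :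
  \sum_r pw x y r * #|[set i | r i == b0]|%:R
  = n%:R * (if b0 then x else y) * (x + y) ^+ n.-1.
Proof.
have E r : #|[set i | r i == b0]|%:R = \sum_(i < n) ((r i == b0)%:R : R).
  rewrite -sum1_card natr_sum big_mkcond /=; apply: eq_bigr => i _; rewrite inE; by case: (r i == b0).
under eq_bigr => r _ do rewrite E mulr_sumr.
rewrite exchange_big /=.
have -> : n%:R * (if b0 then x else y) * (x + y) ^+ n.-1 = \sum_(i < n) ((if b0 then x else y) * (x + y) ^+ n.-1).
  by rewrite sumr_const card_ord -mulrA mulr_natl.
apply: eq_bigr => i _.
pose G (j : 'I_n) (b : bool) : R :=
  if j == i then (if b == b0 then (if b then x else y) else 0) else (if b then x else y).
have Gi b : G i b = if b == b0 then (if b then x else y) else 0 by rewrite /G eqxx.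
have Gj j b : j != i -> G j b = if b then x else y by move=> /negbTE ji; rewrite /G ji.
have H r : pw x y r * (r i == b0)%:R = \prod_(j < n) G j (r j).
  rewrite /pw (bigD1 i) //= [RHS](bigD1 i) //= Gi.
  rewrite [in RHS](eq_bigr (fun j => if r j then x else y)); last by move=> j ji; rewrite Gj.
  by case: (r i == b0); rewrite ?mulr1 ?mulr0 ?mul0r // mulrC mulr1.
under eq_bigr => r _ do rewrite H.
rewrite -(bigA_distr_bigA G) (bigD1 i) //= big_bool !Gi /=.
rewrite (eq_bigr (fun _ => x + y)); last by move=> j ji; rewrite big_bool !Gj.
rewrite prodr_const cardC1 card_ord.
by case: (b0) => /=; rewrite ?add0r ?addr0.
Qed.
End Comb.
Arguments pw {R n}.


Section Main.
Variables (R : realType) (n : nat).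
Implicit Types (r : {ffun 'I_n -> bool}).

Lemma lnpow (a b : R) m l : 0 < a -> 0 < b ->
  ln (a ^+ m * b ^+ l) = m%:R * ln a + l%:R * ln b.
Proof.
move=> a0 b0; rewrite lnM ?posrE ?exprn_gt0 // !lnXn //.
by rewrite -[ln a *+ m]mulr_natl -[ln b *+ l]mulr_natl.
Qed.

Lemma cnt_set r : cnt r n = #|[set i | r i == true]|.
Proof. by rewrite cnt_card; apply: eq_card => i; rewrite !inE eqb_id. Qed.

Lemma cntc_set r : cntc r n = #|[set i | r i == false]|.
Proof. by rewrite cntc_card; apply: eq_card => i; rewrite !inE eqbF_neg. Qed.

Lemma sumA (p a b : R) :
  \sum_(r : {ffun 'I_n -> bool}) wt p r * ((cnt r n)%:R * a + (cntc r n)%:R * b) = n%:R * (p * a + (1 - p) * b).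
Proof.
under eq_bigr => r _ do rewrite mulrDr !mulrA.
rewrite big_split /= -!mulr_suml.
have -> : \sum_(r : {ffun 'I_n -> bool}) wt p r * (cnt r n)%:R = \sum_(r : {ffun 'I_n -> bool}) pw p (1 - p) r * #|[set i | r i == true]|%:R.
  by apply: eq_bigr => r _; rewrite pwE /wt cnt_set.
have -> : \sum_(r : {ffun 'I_n -> bool}) wt p r * (cntc r n)%:R = \sum_(r : {ffun 'I_n -> bool}) pw p (1 - p) r * #|[set i | r i == false]|%:R.
  by apply: eq_bigr => r _; rewrite pwE /wt cntc_set.
rewrite !sum_pw_cnt /= subrKC expr1n !mulr1; ring.
Qed.

Lemma sum_excl (s t : {ffun 'I_n -> bool}) (g : {ffun 'I_n -> bool} -> R) : s != t ->
  \sum_(r | (r != s) && (r != t)) g r = \sum_(r : {ffun 'I_n -> bool}) g r - g s - g t.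
Proof.
move=> st; rewrite [in RHS](bigD1 s) //= [in RHS](bigD1 t) /=; last by rewrite eq_sym st.
ring.
Qed.

Lemma SDhat_eq (s t : {ffun 'I_n -> bool}) (p b1 b2 : R) :
  s != t -> cnt s n = cnt t n -> 0 < p < 1 -> 0 < b1 -> 0 < b2 ->
  SDhat s t p b1 b2 =
  (n%:R * (- p * ln p - (1 - p) * ln (1 - p)) - 2 * wt p s * ln 2)
  / (n%:R * (- p * ln b1 - (1 - p) * ln b2)).
Proof.
move=> st est /andP[p0 p1] b10 b20.
have q0 : 0 < 1 - p by rewrite subr_gt0.
have wts : wt p t = wt p s by rewrite /wt /cntc est.
have rts : rho b1 b2 t = rho b1 b2 s by rewrite /rho /cntc est.
have ws0 : 0 < wt p s by rewrite /wt mulr_gt0 // exprn_gt0.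
rewrite /SDhat !sum_excl // wts rts.
have -> : \sum_(r : {ffun 'I_n -> bool}) wt p r * ln (wt p r) = n%:R * (p * ln p + (1 - p) * ln (1 - p)).
  by rewrite -sumA; apply: eq_bigr => r _; rewrite [in ln _]/wt lnpow.
have -> : \sum_(r : {ffun 'I_n -> bool}) wt p r * ln (rho b1 b2 r) = n%:R * (p * ln b1 + (1 - p) * ln b2).
  by rewrite -sumA; apply: eq_bigr => r _; rewrite /rho lnpow.
have -> : wt p s + wt p s = 2 * wt p s by rewrite mulr_natl mulr2n.
rewrite lnM ?posrE //.
congr (_ / _); ring.
Qed.
End Main.


Definition fF {R : realType} (b1 b2 x : R) : R :=
  - x * ln x - (1 - x) * ln (1 - x) + x * ln b1 + (1 - x) * ln b2.

Lemma final (R : realType) (n : nat) (s t : {ffun 'I_n -> bool}) (b1 b2 p : R) :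
  (0 < n)%N -> s != t -> cnt s n = cnt t n ->
  0 < b1 < 1 -> 0 < b2 < 1 -> 0 < p < 1 ->
  0 < fF b1 b2 p -> n%:R * fF b1 b2 p < 2 * wt p s * ln 2 ->
  SDhat s t p b1 b2 < 1 /\ 1 < SD p b1 b2.
Proof.
move=> n0 st est /andP[b10 b11] /andP[b20 b21] /[dup] p01 /andP[p0 p1] fp fw.
have l1 : ln b1 < 0 by apply: ln_lt0; rewrite b10 b11.
have l2 : ln b2 < 0 by apply: ln_lt0; rewrite b20 b21.
have D0 : 0 < - p * ln b1 - (1 - p) * ln b2.
  have : 0 < p * (- ln b1) + (1 - p) * (- ln b2).
    by apply: addr_gt0; apply: mulr_gt0; rewrite ?subr_gt0 ?oppr_gt0.
  by rewrite !mulrN mulNr.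
have N0 : (0 : R) < n%:R by rewrite ltr0n.
split.
  rewrite SDhat_eq // ?b10 ?b20 // ltr_pdivrMr ?mulr_gt0 // mul1r.
  move: fw; rewrite /fF; lra.
rewrite /SD ltr_pdivlMr // mul1r.
move: fp; rewrite /fF; lra.
Qed.


Lemma eps_exists (R : realType) (b1 b2 : R) : 0 < b1 < 1 -> 0 < b2 < 1 ->
  exists e : R, [/\ 0 < e, e <= 1/2, e < b1 / 2 & fF b1 b2 e < 0].
Proof.
move=> /andP[b10 b11] /andP[b20 b21].
have l1 : ln b1 < 0 by apply: ln_lt0; rewrite b10 b11.
have l2 : ln b2 < 0 by apply: ln_lt0; rewrite b20 b21.
set L := - ln b2.
have L0 : 0 < L by rewrite oppr_gt0.
set X := 6 / L + 2 / b1 + 2.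
have X0 : 0 <= X by rewrite !addr_ge0 // ?divr_ge0 // ltW.
have [k Hk] : exists k : nat, X < k%:R by exists (Num.bound X); apply: archi_boundP.
set K := k%:R in Hk.
have hK2 : 2 < K by move: Hk; rewrite /X; have := divr_gt0 (ltr0n R 6) L0; have := divr_gt0 (ltr0n R 2) b10; lra.
have K0 : 0 < K by lra.
have hKL : 6 < K * L.
  rewrite -ltr_pdivrMr //; move: Hk; rewrite /X; have := divr_gt0 (ltr0n R 2) b10; lra.
have hKb : 2 < K * b1.
  rewrite -ltr_pdivrMr //; move: Hk; rewrite /X; have := divr_gt0 (ltr0n R 6) L0; lra.
set u := K^-1.
have u0 : 0 < u by rewrite invr_gt0.
have huK : u * K = 1 by rewrite mulVf // gt_eqF.
set e := u * u.
have e0 : 0 < e by rewrite mulr_gt0.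
have hu2 : u < 1/2.
  have : u * 2 < u * K by rewrite ltr_pM2l.
  lra.
have he : e <= u / 2.
  have : u * u <= u * (1/2) by rewrite ler_pM2l // ltW.
  rewrite /e; lra.
have hlne : ln e = - (ln K + ln K).
  by rewrite lnM ?posrE // /u lnV ?posrE // opprD.
have hlnK : e * ln K <= e * K by rewrite ler_pM2l // ltW // ln_sublinear.
have heK : e * K = u by rewrite /e -mulrA huK mulr1.
have h1e : 0 < 1 - e by lra.
have hln1 : - (1 - e) * ln (1 - e) <= e.
  have hx : -1 < e / (1 - e) by have := divr_gt0 e0 h1e; lra.
  have := le_ln1Dx hx.
  have -> : 1 + e / (1 - e) = (1 - e)^-1 by field; rewrite gt_eqF.
  rewrite lnV ?posrE // => H.
  have : (1 - e) * (- ln (1 - e)) <= (1 - e) * (e / (1 - e)) by rewrite ler_pM2l.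
  have -> : (1 - e) * (e / (1 - e)) = e by field; rewrite gt_eqF.
  lra.
have hb1 : e * ln b1 <= 0 by rewrite pmulr_rle0 // ltW.
have heL : e * L <= 1/2 * L by rewrite ler_pM2r //; lra.
have h6u : u * 6 < L.
  have : u * 6 < u * (K * L) by rewrite ltr_pM2l.
  by rewrite mulrA huK mul1r.
exists e; split => //; first lra.
  have : u * 2 < u * (K * b1) by rewrite ltr_pM2l.
  rewrite mulrA huK mul1r => H.
  have : e <= u by lra.
  lra.
rewrite /fF hlne.
move: heL h6u; rewrite /L => heL h6u.
lra.
Qed.


Lemma cont_phi (R : realType) (n k m : nat) (b1 b2 : R) (x : R) : 0 < x < 1 ->
  {for x, continuous (fun y : R => n%:R * fF b1 b2 y - y ^+ k * (1 - y) ^+ m * ln 2)}.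
Proof.
case/andP=> x0 x1.
have cl : {for x, continuous (@ln R)} by apply: continuous_ln.
have c1m : {for x, continuous (fun y : R => 1 - y)}.
  by apply: cvgB; [exact: cvg_cst| exact: cvg_id].
have cl1 : {for x, continuous (fun y : R => ln (1 - y))}.
  apply: continuous_comp; first exact: c1m.
  by apply: continuous_ln; rewrite subr_gt0.
rewrite /fF.
apply: cvgB; last apply: cvgM; last exact: cvg_cst.
  apply: cvgM; first exact: cvg_cst.
  apply: cvgD; last by apply: cvgM; [exact: c1m| exact: cvg_cst].
  apply: cvgD; last by apply: cvgM; [exact: cvg_id| exact: cvg_cst].
  apply: cvgB; apply: cvgM => //; [apply: cvgN; exact: cvg_id].
apply: cvgM; first exact: exprn_continuous.
apply: (@continuous_comp _ _ _ (fun y : R => 1 - y) (fun y : R => y ^+ m)) => //; exact: exprn_continuous.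
Qed.

Theorem proposition2p2 (R : realType) (n : nat) (s t : {ffun 'I_n -> bool})
  (b1 b2 : R) :
  (3 <= n)%N -> s != t -> cnt s n = cnt t n ->
  0 < b1 < 1 -> 0 < b2 < 1 -> 1 < b1 + b2 ->
  \sum_(i < n) (sgnb (s i) * b1 ^+ cnt s i.+1 * b2 ^+ cntc s i.+1
                - sgnb (t i) * b1 ^+ cnt t i.+1 * b2 ^+ cntc t i.+1) = 0 ->
  exists p : R, 0 < p < 1 /\ SDhat s t p b1 b2 < 1 /\ 1 < SD p b1 b2.
Proof.
move=> n3 st est hb1 hb2 hc _.
have n0 : (0 < n)%N by apply: leq_trans n3.
have N0 : (0 : R) < n%:R by rewrite ltr0n.
move: (hb1) (hb2) => /andP[b10 b11] /andP[b20 b21].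
have l20 : 0 < ln (2 : R) by apply: ln_gt0; rewrite ltr1n.
set c := b1 + b2.
have c0 : 0 < c by rewrite /c; lra.
set p0 := b1 / c.
have p00 : 0 < p0 by rewrite divr_gt0.
have p01 : p0 < 1 by rewrite ltr_pdivrMr // mul1r /c; lra.
have hq0 : 1 - p0 = b2 / c by rewrite /p0 /c; field; rewrite gt_eqF.
have fp0 : fF b1 b2 p0 = ln c.
  rewrite /fF hq0 /p0 !ln_div ?posrE //.
  have -> : b2 / c = 1 - b1 / c by rewrite -hq0 /p0.
  ring.
have lc0 : 0 < ln c by apply: ln_gt0.
have wpos (x : R) : 0 < x < 1 -> 0 < wt x s.
  by case/andP=> x0 x1; rewrite /wt mulr_gt0 // exprn_gt0 // subr_gt0.
pose phi := fun y : R => n%:R * fF b1 b2 y - y ^+ cnt s n * (1 - y) ^+ cntc s n * ln 2.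
have phiE y : phi y = n%:R * fF b1 b2 y - wt y s * ln 2 by [].
have [hp|hp] := leP (phi p0) 0.
  exists p0; have p0i : 0 < p0 < 1 by rewrite p00 p01.
  split => //; apply: final => //.
    by rewrite fp0.
  move: hp; rewrite phiE; have := wpos _ p0i; nra.
have [e [e0 e2 eb fe]] := @eps_exists R b1 b2 hb1 hb2.
have ep0 : e <= p0.
  have : b1 / 2 <= p0.
    rewrite /p0 -subr_ge0.
    have -> : b1 / c - b1 / 2 = b1 * (2 - c) / (2 * c) by field; rewrite gt_eqF.
    apply: divr_ge0; last by rewrite mulr_ge0 // ltW.
    by apply: mulr_ge0; [exact: ltW | rewrite subr_ge0 /c; lra].
  lra.
have ei : 0 < e < 1 by rewrite e0 /=; lra.
have phie : phi e < 0.
  rewrite phiE; have := wpos _ ei; nra.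
have [q qin phiq] : exists2 q, q \in `[e, p0] & phi q = 0.
  apply: IVT => //.
    apply: continuous_in_subspaceT => x; rewrite inE /= in_itv /= => /andP[ex xp].
    by apply: cont_phi; apply/andP; split; lra.
  by rewrite ge_min ?le_max ?(ltW phie) ?(ltW hp) ?orbT.
move: qin; rewrite in_itv /= => /andP[eq qp].
have qi : 0 < q < 1 by apply/andP; split; lra.
exists q; split => //; apply: final => //; move: phiq; rewrite phiE; have := wpos _ qi; nra.
Qed.
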